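(* Let $(A,\cdot,\alpha,R)$ be a Hom-associative Rota-Baxter algebra where $R$ is a Rota-Baxter operator of weight $-1$, i.e. $R(x)\cdot R(y)=R(R(x)\cdot y+x\cdot R(y)-x\cdot y)$, and assume $\alpha\circ R=R\circ\alpha$. Define $x\ast y=R(x)\cdot y-y\cdot R(x)-x\cdot y$. Then $(A,\ast,\alpha)$ is a left Hom-preLie algebra.
   Context: $\mathbb{K}$ is an algebraically closed field of characteristic $0$. A Hom-associative algebra is a triple $(A,\cdot,\alpha)$ with $\alpha(x)\cdot(y\cdot z)=(x\cdot y)\cdot\alpha(z)$ for all $x,y,z$. A Hom-associative Rota-Baxter algebra of weight $\theta\in\mathbb{K}$ is a quadruple $(A,\cdot,\alpha,R)$ with $(A,\cdot,\alpha)$ Hom-associative and $R:A\to A$ linear satisfying $R(x)\cdot R(y)=R(R(x)\cdot y+x\cdot R(y)+\theta\,x\cdot y)$ for all $x,y$. A left Hom-preLie algebra is a triple $(A,\ast,\alpha)$ with $\alpha(x)\ast(y\ast z)-(x\ast y)\ast\alpha(z)=\alpha(y)\ast(x\ast z)-(y\ast x)\ast\alpha(z)$ for all $x,y,z$. *)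

(* Defs.v *)
From HB Require Import structures.
From mathcomp Require Import all_boot all_order all_algebra.
Set Implicit Arguments. Unset Strict Implicit. Unset Printing Implicit Defensive.
Import GRing.Theory.
Local Open Scope ring_scope.

Definition bilinear_mul (K : fieldType) (A : lmodType K) (mul : A -> A -> A) :=
  (forall a x y z, mul (a *: x + y) z = a *: mul x z + mul y z) /\
  (forall a x y z, mul x (a *: y + z) = a *: mul x y + mul x z).

Definition hom_associative (K : fieldType) (A : lmodType K)
  (mul : A -> A -> A) (alpha : A -> A) :=
  forall x y z, mul (alpha x) (mul y z) = mul (mul x y) (alpha z).

Definition rota_baxter (K : fieldType) (A : lmodType K)
  (mul : A -> A -> A) (R : A -> A) (theta : K) :=
  forall x y, mul (R x) (R y) = R (mul (R x) y + mul x (R y) + theta *: mul x y).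

Definition hom_assoc_RB_algebra (K : fieldType) (A : lmodType K)
  (mul : A -> A -> A) (alpha : {linear A -> A}) (R : {linear A -> A}) (theta : K) :=
  bilinear_mul mul /\ hom_associative mul alpha /\ rota_baxter mul R theta.

Definition left_hom_preLie (K : fieldType) (A : lmodType K)
  (mul : A -> A -> A) (alpha : A -> A) :=
  forall x y z,
    mul (alpha x) (mul y z) - mul (mul x y) (alpha z) =
    mul (alpha y) (mul x z) - mul (mul y x) (alpha z).

Definition star_prod (K : fieldType) (A : lmodType K)
  (mul : A -> A -> A) (R : A -> A) (x y : A) : A :=
  mul (R x) y - mul y (R x) - mul x y.

(* Main.v *)
Require Import Defs.
From HB Require Import structures.
From mathcomp Require Import all_boot all_order all_algebra.
Import GRing.Theory.
Local Open Scope ring_scope.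
Set Implicit Arguments. Unset Strict Implicit.

Inductive aexpr := EAtom of nat | EAdd of aexpr & aexpr | EOpp of aexpr | EZero.

Fixpoint aeval (V : zmodType) (env : seq V) (e : aexpr) : V :=
  match e with
  | EAtom n => nth 0 env n
  | EAdd a b => aeval env a + aeval env b
  | EOpp a => - aeval env a
  | EZero => 0
  end.

Fixpoint anorm (e : aexpr) (i : nat) : int :=
  match e with
  | EAtom n => (i == n)%:Z
  | EAdd a b => anorm a i + anorm b i
  | EOpp a => - anorm a i
  | EZero => 0
  end.

Fixpoint abound (N : nat) (e : aexpr) : bool :=
  match e with
  | EAtom n => (n < N)%N
  | EAdd a b => abound N a && abound N b
  | EOpp a => abound N a
  | EZero => true
  end.

Lemma aeval_sound (V : zmodType) (env : seq V) N e : abound N e ->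
  aeval env e = \sum_(i < N) nth 0 env i *~ anorm e i.
Proof.
elim: e => [n|a IHa b IHb|a IHa|] /=.
- move=> hn; rewrite (bigD1 (Ordinal hn)) //= eqxx mulr1z big1 ?addr0 //.
  move=> i hi; suff -> : (nat_of_ord i == n) = false by [].
  by apply/negbTE; apply: contra hi => /eqP h; apply/eqP/val_inj.
- by case/andP=> /IHa -> /IHb ->; rewrite -big_split; apply: eq_bigr=> i _; rewrite mulrzDr.
- by move=> /IHa ->; rewrite -sumrN; apply: eq_bigr=> i _; rewrite mulrNz.
- by move=> _; rewrite big1 // => i _; rewrite mulr0z.
Qed.



Lemma aeval_eq (V : zmodType) (env : seq V) e1 e2 :
  abound (size env) e1 && abound (size env) e2 &&
    all (fun i => anorm e1 i == anorm e2 i) (iota 0 (size env)) ->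
  aeval env e1 = aeval env e2.
Proof.
move=> /andP[/andP[b1 b2] /allP h].
rewrite (aeval_sound env b1) (aeval_sound env b2); apply: eq_bigr=> i _.
have hi : nat_of_ord i \in iota 0 (size env) by rewrite mem_iota /= add0n ltn_ord.
by rewrite (eqP (h _ hi)).
Qed.

Ltac aconv t u :=
  match constr:(tt) with
  | _ => let _ := constr:(@erefl _ t : t = u) in constr:(true)
  | _ => constr:(false)
  end.

Ltac amem t l :=
  lazymatch l with
  | ?u :: ?l' => let b := aconv t u in lazymatch b with true => constr:(true) | false => amem t l' end
  | nil => constr:(false)
  end.

Ltac acollect t acc :=
  lazymatch t with
  | GRing.add ?a ?b => let acc := acollect a acc in acollect b acc
  | GRing.opp ?a => acollect a acc
  | GRing.zero => acc
  | _ => let b := amem t acc in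
         lazymatch b with true => acc | false => constr:(t :: acc) end
  end.

Ltac aidx t l :=
  lazymatch l with
  | ?u :: ?l' => let b := aconv t u in lazymatch b with true => constr:(0%N) | false => let n := aidx t l' in constr:(S n) end
  end.

Ltac areify t env :=
  lazymatch t with
  | GRing.add ?a ?b => let x := areify a env in let y := areify b env in constr:(EAdd x y)
  | GRing.opp ?a => let x := areify a env in constr:(EOpp x)
  | GRing.zero => constr:(EZero)
  | _ => let n := aidx t env in constr:(EAtom n)
  end.

Ltac asolve V :=
  match goal with |- ?l = ?r =>
    let env0 := acollect l (@nil V) in
    let env := acollect r env0 in
    let el := areify l env in
    let er := areify r env in
    change (aeval (V:=V) env el = aeval (V:=V) env er);
    apply: aeval_eq; vm_compute; reflexivity
  end.

Theorem proposition4p2 (K : closedFieldType) (hK : [pchar K] =i pred0)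
  (A : lmodType K) (mul : A -> A -> A) (alpha R : {linear A -> A}) :
  hom_assoc_RB_algebra mul alpha R (-1) ->
  (forall x, alpha (R x) = R (alpha x)) ->
  bilinear_mul (star_prod mul R) /\ left_hom_preLie (star_prod mul R) alpha.
Proof.
rewrite /hom_assoc_RB_algebra /bilinear_mul /hom_associative /rota_baxter /left_hom_preLie.
move=> [[Hl Hr] [Has Hrb]] Hc.
have mDl x y z : mul (x + y) z = mul x z + mul y z by have := Hl 1 x y z; rewrite !scale1r.
have mDr x y z : mul x (y + z) = mul x y + mul x z by have := Hr 1 x y z; rewrite !scale1r.
have m0l z : mul 0 z = 0.
  by have h := mDl 0 0 z; rewrite addr0 in h; apply/(addrI (mul 0 z)); rewrite addr0 -h.
have m0r z : mul z 0 = 0.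
  by have h := mDr z 0 0; rewrite addr0 in h; apply/(addrI (mul z 0)); rewrite addr0 -h.
have mNl x z : mul (- x) z = - mul x z.
  by apply/eqP; rewrite -addr_eq0 -mDl addNr m0l.
have mNr x z : mul z (- x) = - mul z x.
  by apply/eqP; rewrite -addr_eq0 -mDr addNr m0r.
have mZl a x z : mul (a *: x) z = a *: mul x z by rewrite -[_ *: x]addr0 Hl m0l addr0.
have mZr a x z : mul z (a *: x) = a *: mul z x by rewrite -[_ *: x]addr0 Hr m0r addr0.
have HR x y : R (mul (R x) y) = mul (R x) (R y) - R (mul x (R y)) + R (mul x y).
  by rewrite Hrb !linearD linearZ /= scaleN1r; asolve A.
split.
  split=> a x y z; rewrite /star_prod ?linearD ?linearZ /=
    ?(mDl, mDr, mNl, mNr, mZl, mZr, scalerDr, scalerN); asolve A.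
move=> x y z; rewrite /star_prod.
rewrite !(linearB, linearD, linearN) /= -!Hc !HR.
rewrite ?(mDl, mDr, mNl, mNr, opprD, opprK).
rewrite !Has.
asolve A.
Qed.
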